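(* Let $\mu$ be a positive Radon measure on $\mathbb R^n$ with power growth of exponent $0<\alpha\le n$. Let $I$ be a dyadic cube and $x\in I$. Then $$\int_I\frac{1}{|t-x|^{\alpha-1}}\,d\mu(t)\lesssim\ell(I)\,\rho_{\rm in}(I),$$ with implicit constant depending only on $n$ and $\alpha$.
   Context: $\mu$ has power growth of exponent $\alpha$ if $\mu(I)\lesssim\ell(I)^\alpha$ for every cube $I=\prod_{i=1}^n[a_i,a_i+l)$ ($\ell(I)=l$). Dyadic cubes are $\prod_{i=1}^n2^{-m}[j_i,j_i+1)$, $j_i,m\in\mathbb Z$. $\rho_{\rm in}(I)=\sup_{t\in I,\,0<\lambda<\ell(I)}\mu(I\cap B(t,\lambda))/\lambda^\alpha$, where $B(t,\lambda)$ is the open Euclidean ball of center $t$ and radius $\lambda$. *)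

(* Defs.v *)
From HB Require Import structures.
From mathcomp Require Import all_boot all_order all_algebra.
From mathcomp Require Import all_classical all_reals all_analysis.
Set Implicit Arguments. Unset Strict Implicit. Unset Printing Implicit Defensive.
Import Order.TTheory GRing.Theory Num.Theory.
Import numFieldNormedType.Exports.
Local Open Scope classical_set_scope.
Local Open Scope ring_scope.

Definition Rn (R : realType) (n : nat) :=
  g_sigma_algebraType (@open 'rV[R]_n).

Definition norm2 {R : realType} {n : nat} (v : 'rV[R]_n) : R :=
  Num.sqrt (\sum_(i < n) v ord0 i ^+ 2).

Definition ball2 {R : realType} {n : nat} (t : 'rV[R]_n) (lam : R) : set 'rV[R]_n :=
  [set s | norm2 (s - t) < lam].

Definition cube {R : realType} {n : nat} (a : 'rV[R]_n) (l : R) : set 'rV[R]_n :=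
  [set t | forall i : 'I_n, a ord0 i <= t ord0 i < a ord0 i + l].

Definition dside {R : realType} (m : int) : R := (2 : R) ^ (- m).
Definition dcorner {R : realType} {n : nat} (m : int) (j : 'I_n -> int) : 'rV[R]_n :=
  \row_i ((j i)%:~R * dside m).
Definition dcube {R : realType} {n : nat} (m : int) (j : 'I_n -> int) : set 'rV[R]_n :=
  cube (dcorner m j) (dside m).

Definition power_growth {R : realType} {n : nat}
  (mu : set (Rn R n) -> \bar R) (alpha : R) : Prop :=
  exists C : R, forall (a : 'rV[R]_n) (l : R), 0 < l ->
    (mu (cube a l : set (Rn R n)) <= (C * l `^ alpha)%:E)%E.

Definition rho_in {R : realType} {n : nat}
  (mu : set (Rn R n) -> \bar R) (alpha : R) (a : 'rV[R]_n) (l : R) : \bar R :=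
  ereal_sup [set y | exists t lam, cube a l t /\ 0 < lam < l /\
     y = (mu ((cube a l `&` ball2 t lam) : set (Rn R n)) * ((lam `^ alpha)^-1)%:E)%E].

(* the kernel t |-> |t - x|^(1 - alpha), with value in [0, +oo];
   at t = x: +oo if 1 - alpha < 0, 1 if alpha = 1, 0 if 1 - alpha > 0 *)
Definition kern {R : realType} {n : nat} (alpha : R) (x t : 'rV[R]_n) : \bar R :=
  if t == x then (if 1 - alpha < 0 then +oo%E else if alpha == 1 then 1%E else 0%E)
  else ((norm2 (t - x)) `^ (1 - alpha))%:E.

(* Main.v *)
Require Import Defs.
From HB Require Import structures.
From mathcomp Require Import all_boot all_order all_algebra.
From mathcomp Require Import all_classical all_reals all_analysis.
From mathcomp Require Import measurable_realfun.
From mathcomp Require Import ring lra zify.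
Import Order.TTheory GRing.Theory Num.Theory.
Import numFieldNormedType.Exports.
Local Open Scope classical_set_scope.
Local Open Scope ring_scope.
Lemma int_le d (T : measurableType d) (R : realType) (mu : {measure set T -> \bar R})
  (D : set T) (f g : T -> \bar R) :
  (forall x, D x -> (0 <= f x)%E) -> (forall x, D x -> (f x <= g x)%E) ->
  (\int[mu]_(x in D) f x <= \int[mu]_(x in D) g x)%E.
Proof.
move=> f0 fg.
rewrite (ge0_integralE _ f0) (ge0_integralE mu (f := g)); last first.
  by move=> x Dx; apply: le_trans (f0 x Dx) (fg x Dx).
apply: ereal_sup_le => _ [h hf <-]; exists h => //= x.
apply: le_trans (hf x) _; rewrite /patch; case: ifP => // /set_mem Dx.
exact: fg.
Qed.

Section S.
Variables (R : realType) (n : nat).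
Lemma norm2c (t : 'rV[R]_n) : continuous (fun s : 'rV[R]_n => norm2 (s - t)).
Proof.
move=> s; rewrite /norm2.
apply: continuous_comp; last exact: sqrt_continuous.
apply: (@cvg_big R _ +%R 0 predT _ _ _ _ (fun i s => (s - t) ord0 i ^+ 2)).
- exact: add_continuous.
- exact: nbhs_filter.
move=> i _ /=.
have h : (fun x : 'rV[R]_n => (x - t) ord0 i) @ s --> (s - t) ord0 i.
  rewrite (_ : (fun x : 'rV[R]_n => (x - t) ord0 i) = (fun x => x ord0 i - t ord0 i)); last first.
    by apply/funext => x; rewrite !mxE.
  rewrite !mxE; have hc := @coord_continuous R 1 n ord0 i s.
  have H := cvgB hc (cvg_cst (t ord0 i)).
  by apply: H; exact: nbhs_filter.
have H2 := cvgM h h.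
rewrite expr2; under eq_fun do rewrite expr2.
by apply: H2; exact: nbhs_filter.
Qed.

Lemma ball2_meas (t : 'rV[R]_n) l : measurable (ball2 t l : set (Rn R n)).
Proof.
apply: sub_gen_smallest.
rewrite /ball2 (_ : [set s | norm2 (s - t) < l] = (fun s => norm2 (s - t)) @^-1` [set y | y < l]) //.
apply: open_comp; last exact: open_lt.
move=> s _; exact: norm2c.
Qed.

Lemma coord_lt_meas (i : 'I_n) c : measurable ([set s : 'rV[R]_n | s ord0 i < c] : set (Rn R n)).
Proof.
apply: sub_gen_smallest.
rewrite (_ : [set s : 'rV[R]_n | s ord0 i < c] = (fun s : 'rV[R]_n => s ord0 i) @^-1` [set y | y < c]) //.
apply: open_comp; last exact: open_lt.
move=> s _; exact: coord_continuous.
Qed.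

Lemma cube_meas (a : 'rV[R]_n) l : measurable (cube a l : set (Rn R n)).
Proof.
rewrite (_ : cube a l = \bigcap_(i in [set: 'I_n]) (~` [set s : 'rV[R]_n | s ord0 i < a ord0 i] `&` [set s | s ord0 i < a ord0 i + l])).
  apply: fin_bigcap_measurable; first exact: finite_finset.
  move=> i _; apply: measurableI; last exact: coord_lt_meas.
  by apply: measurableC; exact: coord_lt_meas.
apply/seteqP; split => s /=.
  by move=> h i _; have /andP[h1 h2] := h i; split => //=; rewrite ltNge h1.
move=> h i; have [h1 h2] := h i I; apply/andP; split => //.
by move/negP: h1; rewrite -leNgt.
Qed.
Lemma norm2_le (v : 'rV[R]_n) b : (forall i, `|v ord0 i| <= b) ->
  norm2 v <= Num.sqrt (n%:R * b ^+ 2).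
Proof.
move=> hb; rewrite /norm2 ler_sqrt; last by rewrite mulr_ge0 // sqr_ge0.
have -> : n%:R * b ^+ 2 = \sum_(i < n) b ^+ 2 by rewrite sumr_const card_ord mulr_natl.
apply: ler_sum => i _; have := hb i; rewrite ler_norml => /andP[h1 h2].
nra.
Qed.

Lemma norm2_ge0 (v : 'rV[R]_n) : 0 <= norm2 v.
Proof. exact: sqrtr_ge0. Qed.

Lemma norm2_eq0 (v : 'rV[R]_n) : norm2 v = 0 -> v = 0.
Proof.
rewrite /norm2 => /eqP; rewrite sqrtr_eq0 => h.
have h0 : \sum_(i < n) v ord0 i ^+ 2 = 0.
  by apply/eqP; rewrite eq_le h /=; apply: sumr_ge0 => i _; exact: sqr_ge0.
apply/matrixP => i j; rewrite (ord1 i) mxE.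
have := psumr_eq0P (fun i _ => sqr_ge0 (v ord0 i)) h0 (i := j) isT.
by move/eqP; rewrite sqrf_eq0 => /eqP.
Qed.
Local Notation N := (n.*2).+1.
Local Notation TT := {ffun 'I_n -> 'I_N}.

Definition ccorner (a : 'rV[R]_n) (l : R) (s : TT) : 'rV[R]_n :=
  \row_i (a ord0 i + (s i)%:R * (l / N%:R)).

Lemma ccorner_in a l s : 0 < l -> cube a l (ccorner a l s).
Proof.
move=> l0 i; rewrite mxE; apply/andP; split.
  by rewrite lerDl mulr_ge0 // divr_ge0 // ltW.
rewrite ltrD2l -ltr_pdivlMr; last by rewrite divr_gt0.
rewrite invf_div mulrCA divff ?gt_eqF // mulr1 ltr_nat; exact: ltn_ord.
Qed.

Lemma cover_in a l t : 0 < l -> cube a l t ->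
  exists s : TT, norm2 (t - ccorner a l s) < l / 2.
Proof.
move=> l0 ht.
have N0 : (0 : R) < N%:R by rewrite ltr0n.
pose y i := (t ord0 i - a ord0 i) * N%:R / l.
have y0 i : 0 <= y i.
  have /andP[h1 _] := ht i; rewrite /y divr_ge0 ?(ltW l0) // mulr_ge0 ?(ltW N0) //.
  by rewrite subr_ge0.
have yN i : (Num.truncn (y i) < N)%N.
  rewrite truncn_lt_nat // /y ltr_pdivrMr // mulrC ltr_pM2l //.
  by have /andP[_ h2] := ht i; rewrite ltrBlDl.
exists [ffun i => Ordinal (yN i)].
have lN : 0 < l / N%:R by rewrite divr_gt0.
apply: (le_lt_trans (@norm2_le _ (l / N%:R) _)).
  move=> i; rewrite !mxE ffunE /=.
  have /andP[h1 h2] := truncn_itv (y0 i).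
  have e : t ord0 i - (a ord0 i + (Num.truncn (y i))%:R * (l / N%:R))
         = (y i - (Num.truncn (y i))%:R) * (l / N%:R).
    by rewrite /y; field; rewrite ?gt_eqF.
  rewrite e normrM (gtr0_norm lN) ger0_norm ?subr_ge0 //.
  rewrite ler_piMl ?(ltW lN) //.
  by move: h2; rewrite -natr1 => h2; rewrite lerBlDl ltW.
rewrite -(ger0_norm (ltW (divr_gt0 l0 (ltr0n _ 2)))) -sqrtr_sqr ltr_sqrt; last first.
  by rewrite exprn_gt0 // divr_gt0.
have hN : (4 * n < N ^ 2)%N.
  rewrite -addn1 -mul2n expnS expn1; nia.
have hN' : 4 * n%:R < N%:R ^+ 2 :> R.
  by rewrite -natrX -(natrM R 4) ltr_nat.
rewrite !expr_div_n mulrA ltr_pdivrMr; last by rewrite exprn_gt0.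
rewrite mulrAC ltr_pdivlMr; last by [].
have l2 : 0 < l ^+ 2 by exact: exprn_gt0.
nra.
Qed.
Lemma mu_cube_le (mu : {measure set (Rn R n) -> \bar R}) (a : 'rV[R]_n) l r alpha :
  0 < l ->
  (forall t lam, cube a l t -> 0 < lam < l ->
     (mu ((cube a l `&` ball2 t lam) : set (Rn R n)) <= (r * lam `^ alpha)%:E)%E) ->
  (mu (cube a l : set (Rn R n)) <= (#|TT|%:R * (r * (l/2) `^ alpha))%:E)%E.
Proof.
move=> l0 hb.
pose s0 : TT := [ffun _ => ord0].
pose F k := ((cube a l `&` ball2 (ccorner a l (nth s0 (enum TT) k)) (l/2)) : set (Rn R n)).
have := @content_subadditive _ _ _ mu (cube a l : set (Rn R n)) F #|TT|.
move=> /(_ _ (cube_meas a l)) H.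
apply: le_trans (H _ _) _.
- by move=> k _; apply: measurableI; [exact: cube_meas| exact: ball2_meas].
- move=> t ht; have [s hs] := @cover_in a l t l0 ht.
  rewrite -bigcup_mkord; exists (index s (enum TT)).
    by rewrite /= cardE index_mem mem_enum.
  by rewrite /F nth_index ?mem_enum //; split.
have -> : #|TT|%:R * (r * (l / 2) `^ alpha) = \sum_(k < #|TT|) (r * (l / 2) `^ alpha).
  by rewrite sumr_const card_ord mulr_natl.
rewrite -sumEFin; apply: lee_sum => k _.
apply: hb; first exact: ccorner_in.
rewrite divr_gt0 //=; lra.
Qed.
End S.
Section Aux.
Variable R : realType.

Lemma pow_id (q b : R) : 0 < q -> (2 / q) `^ b * q `^ (b + 1) = 2 `^ b * q.
Proof.
move=> q0.
rewrite powRD; last by rewrite (gt_eqF q0) implybT.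
rewrite powRr1 ?(ltW q0) // powRM ?invr_ge0 ?(ltW q0) //.
have e : q^-1 `^ b * q `^ b = 1.
  by rewrite -powRM ?invr_ge0 ?(ltW q0) // mulVf ?gt_eqF // powR1.
by rewrite -mulrA (mulrA (q^-1 `^ b)) e mul1r.
Qed.

Lemma kern_bd (d q b : R) : 0 < d -> 0 < q -> q / 2 <= d -> 0 <= b ->
  d `^ (- b) <= (2 / q) `^ b.
Proof.
move=> d0 q0 qd b0; rewrite powRN.
have h : 0 < d `^ b by exact: powR_gt0.
rewrite -[(d `^ b)^-1]mul1r ler_pdivrMr // -powRM ?(ltW d0) //; last first.
  by rewrite divr_ge0 // ltW.
apply: (@le_trans _ _ (1 `^ b)); first by rewrite powR1.
apply: ge0_ler_powR => //; rewrite ?nnegrE ?ler01 //.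
  by rewrite mulr_ge0 // ?divr_ge0 // ltW.
by rewrite mulrAC ler_pdivlMr // mul1r; lra.
Qed.

Lemma series_infty (u : nat -> R) (b : R) : 0 < b -> (forall k, b <= u k) ->
  (\sum_(k <oo) (u k)%:E = +oo)%E.
Proof.
move=> b0 hu; apply: eq_infty => r.
pose N := (Num.truncn (r / b)).+1.
apply: (@le_trans _ _ (\sum_(0 <= k < N) (u k)%:E)%R); last first.
  by apply: nneseries_lim_ge => k _ _; rewrite lee_fin (le_trans (ltW b0)).
rewrite sumEFin lee_fin.
apply: (@le_trans _ _ (\sum_(0 <= k < N) b)%R); last first.
  by apply: ler_sum => k _.
rewrite sumr_const_nat subn0 -mulr_natl -ler_pdivrMr //.
by apply: ltW; rewrite /N; exact: truncnS_gt.
Qed.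

Lemma geo_sum (M : R) : (\sum_(k <oo) ((M / (2 ^ (k + 1))%:R)%:E) = M%:E)%E.
Proof.
have := @cvg_geometric_eseries_half R M 0.
rewrite expr0 divr1 => /cvg_lim <- //.
Qed.
End Aux.
Lemma find_k (R : realType) (l d : R) : 0 < l -> 0 < d ->
  exists k, l / (2 ^ k)%:R / 2 <= d /\ ((0 < k)%N -> d < l / (2 ^ k)%:R).
Proof.
move=> l0 d0.
have ex : exists k, l / (2 ^ k)%:R / 2 <= d.
  exists (Num.truncn (l / d)).
  set k := Num.truncn (l / d).
  have h1 : l / d < k.+1%:R by exact: truncnS_gt.
  have h2 : (k < 2 ^ k)%N by exact: (@ltn_expl 2 k).

  have h3 : (k.+1%:R : R) <= (2 ^ k)%:R by rewrite ler_nat; exact: h2.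
  have p0 : (0 : R) < (2 ^ k)%:R by rewrite ltr0n expn_gt0.
  rewrite ltr_pdivrMr // in h1.
  have h4 : l < (2 ^ k)%:R * d by apply: (lt_le_trans h1); rewrite ler_pM2r.
  rewrite ler_pdivrMr // ler_pdivrMr //; nra.
case: (ex_minnP ex) => k Pk kmin; exists k; split => // /prednK ek.
rewrite ltNge; apply/negP => h.
have e : l / (2 ^ k.-1)%:R / 2 = l / (2 ^ k)%:R.
  rewrite -{2}ek expnS natrM; field.
  by rewrite pnatr_eq0 expn_eq0.
have := kmin k.-1; rewrite e => /(_ h).
by rewrite -{1}ek ltnn.
Qed.

Theorem lemma5p1 (R : realType) (n : nat) (alpha : R) :
  0 < alpha -> alpha <= n%:R ->
  exists C : R, 0 < C /\
  forall (mu : {measure set (Rn R n) -> \bar R}),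
    power_growth mu alpha ->
    forall (m : int) (j : 'I_n -> int) (x : 'rV[R]_n),
      dcube m j x ->
      (\int[mu]_(t in (dcube m j : set (Rn R n))) kern alpha x t
        <= (C * dside m)%:E
           * rho_in mu alpha (dcorner m j) (dside m))%E.
Proof.
move=> a0 an.
pose K : R := #|{ffun 'I_n -> 'I_(n.*2).+1}|%:R * (2^-1) `^ alpha.
have K0 : 0 <= K by rewrite mulr_ge0 // powR_ge0.
pose C1 : R := (Num.sqrt n%:R) `^ (1 - alpha) * K.
pose C2 : R := 2 * 2 `^ (alpha - 1) * (K + 1).
have C10 : 0 <= C1 by rewrite mulr_ge0 // powR_ge0.
have C20 : 0 < C2.
  by rewrite !mulr_gt0 // ?powR_gt0 //; apply: (lt_le_trans ltr01); rewrite lerDr.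
exists (C1 + C2); split; first by apply: (lt_le_trans C20); rewrite lerDr.
move=> mu _ m j x hx.
rewrite /dcube in hx *.
set l := dside m in hx *; set a := dcorner m j in hx *.
have l0 : 0 < l by rewrite /l /dside exprz_gt0.
have kern0 t : (0 <= kern alpha x t)%E.
  rewrite /kern; case: ifP => _; last by rewrite lee_fin powR_ge0.
  by case: ifP => _ //; case: ifP.
have rho0 : (0 <= rho_in mu alpha a l)%E.
  apply: le_trans (ereal_sup_ubound _); last first.
    exists x, (l / 2); split => //; split; last by [].
    by apply/andP; split; [rewrite divr_gt0 | lra].
  by apply: mule_ge0; [exact: measure_ge0 | rewrite lee_fin invr_ge0 powR_ge0].
have Cl0 : 0 < (C1 + C2) * l.
  by rewrite mulr_gt0 //; apply: (lt_le_trans C20); rewrite lerDr.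
case Er : (rho_in mu alpha a l) rho0 => [r| |] // r0; last first.
  by rewrite gt0_muley ?lte_fin // leey.
rewrite lee_fin in r0.
have hb t lam : cube a l t -> 0 < lam < l ->
    (mu ((cube a l `&` ball2 t lam) : set (Rn R n)) <= (r * lam `^ alpha)%:E)%E.
  move=> ht /andP[lam0 laml].
  have h : (mu ((cube a l `&` ball2 t lam) : set (Rn R n)) * ((lam `^ alpha)^-1)%:E <= r%:E)%E.
    rewrite -Er; apply: ereal_sup_ubound; exists t, lam; split => //; split => //.
    by apply/andP.
  have p0 : 0 < lam `^ alpha by exact: powR_gt0.
  move: h; case E : (mu _) => [u| |] //.
  - by rewrite -EFinM !lee_fin ler_pdivrMr.
  - by rewrite gt0_mulye ?lte_fin ?invr_gt0.
  - by move=> _; rewrite leNye.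
have hI : (mu (cube a l : set (Rn R n)) <= (K * r * l `^ alpha)%:E)%E.
  apply: le_trans (@mu_cube_le R n mu a l r alpha l0 hb) _; rewrite lee_fin.
  rewrite powRM ?(ltW l0) ?invr_ge0 // /K.
  by rewrite le_eqVlt; apply/orP; left; apply/eqP; ring.
have xt t : cube a l t -> forall i, `|t ord0 i - x ord0 i| <= l.
  move=> ht i; have /andP[h1 h2] := ht i; have /andP[h3 h4] := hx i.
  rewrite ler_norml; apply/andP; split; lra.
have [a1|a1] := leP alpha 1.
  pose M := (Num.sqrt n%:R * l) `^ (1 - alpha).
  apply: le_trans (@int_le _ _ _ mu _ _ (fun _ => M%:E) (fun t _ => kern0 t) _) _.
    move=> t ht; rewrite /kern; case: eqP => [_|/eqP tx].
      rewrite ltNge subr_ge0 a1 /=; case: eqP => [e|_].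
        by rewrite /M e subrr powRr0.
      by rewrite lee_fin powR_ge0.
    rewrite lee_fin; apply: ge0_ler_powR; rewrite ?nnegrE ?subr_ge0 //.
    - exact: norm2_ge0.
    - by rewrite mulr_ge0 ?sqrtr_ge0 // ltW.
    apply: le_trans (@norm2_le R n (t - x) l _) _; first by move=> i; rewrite !mxE; exact: xt.
    by rewrite sqrtrM // sqrtr_sqr ger0_norm // ltW.
  rewrite integral_cst; last exact: cube_meas.
  apply: le_trans (lee_wpmul2l _ hI) _; first by rewrite lee_fin powR_ge0.
  rewrite -!EFinM lee_fin /M powRM ?sqrtr_ge0 ?(ltW l0) //.
  have e : l `^ (1 - alpha) * l `^ alpha = l.
    by rewrite -powRD ?subrK ?powRr1 ?(ltW l0) // gt_eqF // implybT.
  have -> : Num.sqrt n%:R `^ (1 - alpha) * l `^ (1 - alpha) * (K * r * l `^ alpha)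
     = C1 * r * (l `^ (1 - alpha) * l `^ alpha) by rewrite /C1; ring.
  rewrite e.
  have : 0 <= C2 * l * r by apply: mulr_ge0 => //; apply: mulr_ge0; apply: ltW.
  nra.
pose be := alpha - 1.
have be0 : 0 <= be by rewrite /be subr_ge0 ltW.
have abe : alpha = be + 1 by rewrite /be subrK.
pose rr k : R := l / (2 ^ k)%:R.
have p2 k : (0 : R) < (2 ^ k)%:R by rewrite ltr0n expn_gt0.
have rr0 k : 0 < rr k by rewrite divr_gt0.
have rrl k : rr k <= l by rewrite ler_pdivrMr // ler_peMr ?(ltW l0) // ler1n expn_gt0.
have rrl1 k : (0 < k)%N -> rr k < l.
  move=> k0; rewrite ltr_pdivrMr // ltr_pMr // ltr1n.
  by rewrite -{1}(expn0 2) ltn_exp2l.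
have rrO : rr 0 = l by rewrite /rr expn0 divr1.
pose w k := (2 / rr k) `^ be.
have w0 k : 0 < w k by rewrite powR_gt0 // divr_gt0.
have wk k : w 0 <= w k.
  apply: ge0_ler_powR; rewrite ?nnegrE ?divr_ge0 ?(ltW (rr0 _)) //.
  all: try exact: ltW l0.
  apply: ler_wpM2l => //; rewrite lef_pV2 ?posrE // rrO; exact: rrl.
pose A k : set (Rn R n) := if k is 0 then cube a l else ball2 x (rr k).
have mA k : measurable (A k) by case: k => [|k]; [exact: cube_meas | exact: ball2_meas].
pose f k (t : Rn R n) := ((w k)%:E * (\1_(A k) t)%:E)%E.
have f0 k t : (0 <= f k t)%E by rewrite mule_ge0 // lee_fin ?(ltW (w0 _)).
have mf k : measurable_fun (cube a l : set (Rn R n)) (f k).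
  apply: measurable_funeM; apply/measurable_EFinP; exact: measurable_indic.
have norm20 : norm2 (x - x) = 0.
  rewrite subrr /norm2 big1 ?sqrtr0 // => i _; by rewrite mxE expr0n.
have xA k : A k x by case: k => [|k] //=; rewrite /ball2 /= norm20.
have h1a : 1 - alpha < 0 by rewrite subr_lt0.
apply: (le_trans (@int_le _ _ _ mu _ _ (fun t => (\sum_(k <oo) f k t)%E) (fun t _ => kern0 t) _)).
  move=> t ht; rewrite /kern; case: eqP => [tx|/eqP tx].
    rewrite h1a tx.
    rewrite (@eq_eseriesr _ _ (fun k => (w k)%:E)); last first.
      by move=> k _; rewrite /f indicE mem_set // mule1.
    by rewrite (@series_infty R w (w 0) (w0 0) wk).
  have d0 : 0 < norm2 (t - x).
    rewrite lt_neqAle norm2_ge0 andbT eq_sym; apply/negP => /eqP /norm2_eq0 /eqP.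
    by rewrite subr_eq0; apply/negP.
  have [k [hk1 hk2]] := @find_k R l _ l0 d0.
  have tA : A k t.
    by case: k hk1 hk2 => [|k] _ h //=; rewrite /ball2 /=; exact: h.
  apply: (@le_trans _ _ (f k t)).
    rewrite /f indicE mem_set // mule1 lee_fin.
    have -> : 1 - alpha = - be by rewrite /be opprB.
    exact: (@kern_bd R _ _ _ d0 (rr0 k) hk1 be0).
  apply: le_trans (nneseries_lim_ge k.+1 (fun i _ _ => f0 i t)).
  by rewrite big_nat_recr //= leeDr //; exact: sume_ge0.
rewrite (integral_nneseries _ (@cube_meas R n a l) mf (fun k t _ => f0 k t)).
pose M := C2 * l * r.
apply: (@le_trans _ _ (\sum_(k <oo) ((M / (2 ^ (k + 1))%:R)%:E))%E).
  apply: lee_nneseries => [k _ _|k _]; first exact: integral_ge0 (fun t _ => f0 k t).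
  rewrite /f ge0_integralZl_EFin //.
  all: try exact: (@cube_meas R n a l).
  all: try (by apply/measurable_EFinP; exact: measurable_indic).
  all: try (by move=> t _; rewrite lee_fin).
  all: try exact: ltW (w0 k).
  rewrite integral_indic //; last exact: (@cube_meas R n a l).
  have P0 : 0 <= 2 `^ be * l * r by apply: mulr_ge0 => //; apply: mulr_ge0; [exact: powR_ge0 | exact: ltW].
  case: k => [|k].
    rewrite /= setIid.
    apply: le_trans (lee_wpmul2l _ hI) _; first by rewrite lee_fin ltW.
    rewrite -EFinM lee_fin.
    have e0 : w 0 * l `^ alpha = 2 `^ be * l by rewrite /w rrO abe pow_id.
    have -> : w 0 * (K * r * l `^ alpha) = K * (2 `^ be * l * r) by rewrite -e0; ring.
    have -> : M / (2 ^ (0 + 1))%:R = (K + 1) * (2 `^ be * l * r).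
      by rewrite /M /C2 -/be add0n expn1; field.
    by apply: ler_wpM2r => //; rewrite lerDl.
  rewrite /= setIC.
  have rk : 0 < rr k.+1 < l by rewrite rr0 rrl1.
  apply: le_trans (lee_wpmul2l _ (hb x (rr k.+1) hx rk)) _; first by rewrite lee_fin ltW.
  rewrite -EFinM lee_fin.
  have e0 : w k.+1 * rr k.+1 `^ alpha = 2 `^ be * rr k.+1 by rewrite /w abe pow_id.
  have Q0 : (0 : R) < (2 ^ k.+1)%:R by [].
  have -> : w k.+1 * (r * rr k.+1 `^ alpha) = (2 `^ be * l * r / (2 ^ k.+1)%:R) * 1.
    rewrite mulrCA e0 /rr; field; by rewrite gt_eqF.
  have -> : M / (2 ^ (k.+1 + 1))%:R = (2 `^ be * l * r / (2 ^ k.+1)%:R) * (K + 1).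
    rewrite /M /C2 -/be addn1 expnS natrM; field; by rewrite gt_eqF.
  apply: ler_wpM2l; first by rewrite divr_ge0 // ltW.
  by rewrite lerDr.
rewrite geo_sum -EFinM lee_fin /M.
have : 0 <= C1 * l * r by apply: mulr_ge0 => //; apply: mulr_ge0 => //; apply: ltW.
nra.
Qed.
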